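(* A multiplicative function $m:\mathbb{R}_+\to\mathbb{R}_+$ is Jensen convex (i.e. $m\big(\frac{x+y}{2}\big)\le\frac{m(x)+m(y)}{2}$ for all $x,y>0$) if and only if there exists an additive function $a:\mathbb{R}\to\mathbb{R}$ such that \[ m(t)\ge 1+a(t-1)\qquad(t\in\mathbb{R}_+). \]
   Context: $\mathbb{R}_+=]0,\infty[$. $m:\mathbb{R}_+\to\mathbb{R}_+$ is multiplicative if $m(xy)=m(x)m(y)$ for all $x,y>0$; $a:\mathbb{R}\to\mathbb{R}$ is additive if $a(x+y)=a(x)+a(y)$ for all $x,y\in\mathbb{R}$. *)

(* Defs.v *)
From Stdlib Require Import Reals.
Open Scope R_scope.

(* A function m : R_+ -> R_+ is modelled as m : R -> R, only its values on
   ]0,oo[ matter; it maps positives to positives. *)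
Definition maps_Rpos_to_Rpos (m : R -> R) : Prop :=
  forall x, 0 < x -> 0 < m x.

Definition multiplicative_pos (m : R -> R) : Prop :=
  forall x y, 0 < x -> 0 < y -> m (x * y) = m x * m y.

Definition additive (a : R -> R) : Prop :=
  forall x y, a (x + y) = a x + a y.

Definition jensen_convex_pos (m : R -> R) : Prop :=
  forall x y, 0 < x -> 0 < y -> m ((x + y) / 2) <= (m x + m y) / 2.

(* Main.v *)
Require Import Defs.
From Stdlib Require Import Reals Lra Lia.
From Stdlib Require Import ClassicalEpsilon.
Open Scope R_scope.

Definition hh (k : nat) : R := (/2)^k.

Lemma hh_pos k : 0 < hh k.
Proof. unfold hh. apply pow_lt. lra. Qed.

Lemma hh_S k : hh (S k) = hh k / 2.
Proof. unfold hh. simpl. field. Qed.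

Lemma hh_le1 k : hh k <= 1.
Proof.
  induction k. unfold hh; simpl; lra.
  rewrite hh_S. pose proof (hh_pos k). lra.
Qed.

Lemma hh_0 : hh 0 = 1.
Proof. reflexivity. Qed.

Lemma convex_pos x y c : 0 < x -> 0 < y -> 0 < c -> c <= 1 -> 0 < x + c * (y - x).
Proof. intros. nra. Qed.

Lemma m_one m : maps_Rpos_to_Rpos m -> multiplicative_pos m -> m 1 = 1.
Proof.
  intros Hp Hm. pose proof (Hm 1 1 Rlt_0_1 Rlt_0_1) as H.
  rewrite Rmult_1_l in H. pose proof (Hp 1 Rlt_0_1).
  assert (m 1 * (m 1 - 1) = 0) by nra.
  apply Rmult_integral in H1. destruct H1; lra.
Qed.

Lemma Lhalf m : maps_Rpos_to_Rpos m -> jensen_convex_pos m ->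
  forall k x y, 0 < x -> 0 < y ->
  m (x + hh k * (y - x)) - m x <= hh k * (m y - m x).
Proof.
  intros Hp Hj k. induction k; intros x y Hx Hy.
  - rewrite hh_0. replace (x + 1 * (y - x)) with y by ring. lra.
  - pose proof (IHk x y Hx Hy) as IH.
    set (z := x + hh k * (y - x)).
    assert (Hz : 0 < z) by (apply convex_pos; auto using hh_pos, hh_le1).
    replace (x + hh (S k) * (y - x)) with ((x + z) / 2)
      by (unfold z; rewrite hh_S; field).
    pose proof (Hj x z Hx Hz). rewrite hh_S. fold z in IH. lra.
Qed.

Definition Sq (m : R -> R) (s : R) (k : nat) : R := (m (1 + hh k * s) - 1) / hh k.

Lemma Sq_dec m : maps_Rpos_to_Rpos m -> multiplicative_pos m -> jensen_convex_pos m ->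
  forall s k, 0 < 1 + hh k * s -> Sq m s (S k) <= Sq m s k.
Proof.
  intros Hp Hm Hj s k Hv.
  pose proof (Lhalf m Hp Hj 1 1 (1 + hh k * s) Rlt_0_1 Hv) as L.
  rewrite (m_one m Hp Hm) in L.
  replace (1 + hh 1 * (1 + hh k * s - 1)) with (1 + hh (S k) * s) in L
    by (rewrite hh_S; unfold hh; simpl; field).
  unfold hh in L at 2. simpl in L.
  unfold Sq. rewrite hh_S. pose proof (hh_pos k).
  replace ((m (1 + hh k / 2 * s) - 1) / (hh k / 2)) with
      (2 * (m (1 + hh k / 2 * s) - 1) * / hh k) by (field; lra).
  unfold Rdiv at 2. apply Rmult_le_compat_r.
  - left; apply Rinv_0_lt_compat; auto.
  - rewrite hh_S in L. lra.
Qed.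

Lemma valid_ev w : exists K, forall k, (k >= K)%nat -> Rabs (hh k * w) < 1.
Proof.
  assert (Habs : Rabs (/2) < 1) by (rewrite Rabs_pos_eq; lra).
  assert (Hy : 0 < / (Rabs w + 1)) by (apply Rinv_0_lt_compat; pose proof (Rabs_pos w); lra).
  destruct (pow_lt_1_zero (/2) Habs _ Hy) as [K HK].
  exists K. intros k Hk. specialize (HK k Hk). fold (hh k) in HK.
  rewrite Rabs_mult. pose proof (Rabs_pos w). pose proof (Rabs_pos (hh k)).
  assert (Rabs (hh k) * (Rabs w + 1) < 1).
  { apply Rmult_lt_reg_r with (/ (Rabs w + 1)); auto.
    rewrite Rmult_assoc, Rinv_r by lra. lra. }
  nra.
Qed.

Lemma valid_ev1 w : exists K, forall k, (k >= K)%nat -> 0 < 1 + hh k * w.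
Proof.
  destruct (valid_ev w) as [K HK]. exists K. intros k Hk.
  specialize (HK k Hk). apply Rabs_def2 in HK. lra.
Qed.

Lemma Sq_dec_from m : maps_Rpos_to_Rpos m -> multiplicative_pos m -> jensen_convex_pos m ->
  forall s K, (forall k, (k >= K)%nat -> 0 < 1 + hh k * s) ->
  forall j, Sq m s (j + K) <= Sq m s K.
Proof.
  intros Hp Hm Hj s K HK j. induction j. simpl; lra.
  apply Rle_trans with (Sq m s (j + K)); auto.
  replace (S j + K)%nat with (S (j + K)) by lia.
  apply Sq_dec; auto. apply HK. lia.
Qed.

Lemma Sq_lb m : maps_Rpos_to_Rpos m -> multiplicative_pos m -> jensen_convex_pos m ->
  forall s k, 0 < 1 + hh k * s -> 0 < 1 + hh k * (- s) -> 0 <= Sq m s k + Sq m (-s) k.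
Proof.
  intros Hp Hm Hj s k H1 H2.
  pose proof (Hj _ _ H1 H2) as J.
  replace ((1 + hh k * s + (1 + hh k * - s)) / 2) with 1 in J by field.
  rewrite (m_one m Hp Hm) in J. pose proof (hh_pos k).
  unfold Sq.
  replace ((m (1 + hh k * s) - 1) / hh k + (m (1 + hh k * - s) - 1) / hh k)
    with ((m (1 + hh k * s) - 1 + (m (1 + hh k * - s) - 1)) * / hh k) by (field; lra).
  apply Rmult_le_pos. lra. left; apply Rinv_0_lt_compat; auto.
Qed.

Lemma Sq_cv m : maps_Rpos_to_Rpos m -> multiplicative_pos m -> jensen_convex_pos m ->
  forall s, exists l, Un_cv (Sq m s) l.
Proof.
  intros Hp Hm Hj s.
  destruct (valid_ev1 s) as [K1 HK1]. destruct (valid_ev1 (-s)) as [K2 HK2].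
  set (K := max K1 K2).
  assert (V1 : forall k, (k >= K)%nat -> 0 < 1 + hh k * s) by (intros; apply HK1; lia).
  assert (V2 : forall k, (k >= K)%nat -> 0 < 1 + hh k * (-s)) by (intros; apply HK2; lia).
  assert (Hd : Un_decreasing (fun n => Sq m s (n + K))).
  { intro n. simpl. apply Sq_dec; auto. apply V1. lia. }
  assert (Hl : has_lb (fun n => Sq m s (n + K))).
  { exists (Sq m (-s) K). intros x [i ->]. unfold opp_seq; cbv beta.
    pose proof (Sq_lb m Hp Hm Hj s (i + K) (V1 (i+K)%nat ltac:(lia)) (V2 (i+K)%nat ltac:(lia))).
    pose proof (Sq_dec_from m Hp Hm Hj (-s) K V2 i). lra. }
  destruct (decreasing_cv _ Hd Hl) as [l Hcv].
  exists l. eapply CV_shift; eauto.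
Qed.

Lemma cv_le u l c : Un_cv u l -> (forall k, u k <= c) -> l <= c.
Proof.
  intros Hcv Hle. destruct (Rle_or_lt l c) as [H|H]; auto.
  destruct (Hcv (l - c)) as [N HN]; [lra|].
  specialize (HN N (le_n N)). specialize (Hle N). unfold R_dist in HN.
  apply Rabs_def2 in HN. lra.
Qed.

Lemma cv_const c : Un_cv (fun _ => c) c.
Proof. intros e He. exists 0%nat. intros. unfold R_dist. rewrite Rminus_diag, Rabs_R0. lra. Qed.

Lemma cv_hh : Un_cv hh 0.
Proof.
  intros e He. assert (Habs : Rabs (/2) < 1) by (rewrite Rabs_pos_eq; lra).
  destruct (pow_lt_1_zero (/2) Habs e He) as [N HN]. exists N. intros n Hn.
  unfold R_dist. rewrite Rminus_0_r. apply HN. auto.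
Qed.

Lemma cv_abs1 g : Un_cv g 1 -> Un_cv (fun k => Rabs (g k - 1)) 0.
Proof.
  intros H e He. destruct (H e He) as [N HN]. exists N. intros n Hn.
  unfold R_dist in *. rewrite Rminus_0_r, Rabs_Rabsolu. auto.
Qed.

Lemma squeeze0 E F : Un_cv F 0 -> (exists K, forall k, (k >= K)%nat -> Rabs (E k) <= F k) ->
  Un_cv E 0.
Proof.
  intros HF [K HK] e He. destruct (HF e He) as [N HN]. exists (max N K).
  intros n Hn. specialize (HN n ltac:(lia)). specialize (HK n ltac:(lia)).
  unfold R_dist in *. rewrite Rminus_0_r in *. 
  pose proof (Rle_abs (F n)). lra.
Qed.

Lemma mcv1 m s l : Un_cv (Sq m s) l -> Un_cv (fun k => m (1 + hh k * s)) 1.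
Proof.
  intros H.
  apply Un_cv_ext with (fun k => 1 + hh k * Sq m s k).
  { intro k. unfold Sq. pose proof (hh_pos k). field. lra. }
  assert (Hc : Un_cv (fun k => 1 + hh k * Sq m s k) (1 + 0 * l)).
  { apply CV_plus. apply cv_const. apply CV_mult; auto. apply cv_hh. }
  rewrite Rmult_0_l, Rplus_0_r in Hc. exact Hc.
Qed.

Lemma additive_D m : maps_Rpos_to_Rpos m -> multiplicative_pos m -> jensen_convex_pos m ->
  forall D : R -> R, (forall s, Un_cv (Sq m s) (D s)) -> additive D.
Proof.
  intros Hp Hm Hj D HD s t.
  set (u := s + t). set (v := s * t).
  set (T := fun k => Sq m s k * m (1 + hh k * t) + Sq m t k).
  assert (HT : Un_cv T (D s + D t)).
  { replace (D s + D t) with (D s * 1 + D t) by ring.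
    apply CV_plus; auto. apply CV_mult; auto. eapply mcv1; eauto. }
  set (E := fun k => T k - Sq m u k).
  set (F := fun k => Rabs (m (1 + hh k * (u + v)) - 1) + Rabs (m (1 + hh k * u) - 1)
                   + Rabs (m (1 + hh k * (u - v)) - 1) + Rabs (m (1 + hh k * u) - 1)).
  assert (HF : Un_cv F 0).
  { replace 0 with (0 + 0 + 0 + 0) by ring.
    repeat apply CV_plus; apply cv_abs1; eapply mcv1; eauto. }
  assert (HE : Un_cv E 0).
  { apply squeeze0 with F; auto.
    destruct (valid_ev1 s) as [K1 H1]. destruct (valid_ev1 t) as [K2 H2].
    destruct (valid_ev1 u) as [K3 H3]. destruct (valid_ev1 (u + v)) as [K4 H4].
    destruct (valid_ev1 (u - v)) as [K5 H5].
    exists (max K1 (max K2 (max K3 (max K4 K5)))). intros k Hk.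
    specialize (H1 k ltac:(lia)). specialize (H2 k ltac:(lia)).
    specialize (H3 k ltac:(lia)). specialize (H4 k ltac:(lia)).
    specialize (H5 k ltac:(lia)).
    pose proof (hh_pos k) as Hh. pose proof (hh_le1 k) as Hh1.
    set (h := hh k) in *.
    set (x := 1 + h * u) in *.
    assert (Eq1 : E k = (m (x + h * ((1 + h * (u + v)) - x)) - m x) / h).
    { unfold E, T, Sq. fold h.
      assert (Hmul : m ((1 + h * s) * (1 + h * t)) = m (1 + h * s) * m (1 + h * t))
        by (apply Hm; auto).
      replace ((1 + h * s) * (1 + h * t)) with (x + h * (1 + h * (u + v) - x)) in Hmul
        by (unfold x, u, v; ring).
      rewrite Hmul. unfold x. field. lra. }
    pose proof (Lhalf m Hp Hj k x (1 + h * (u + v)) H3 H4) as Up. fold h in Up.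
    pose proof (Lhalf m Hp Hj k x (1 + h * (u - v)) H3 H5) as Lo. fold h in Lo.
    assert (Pa : 0 < x + h * (1 + h * (u + v) - x)) by (apply convex_pos; auto).
    assert (Pb : 0 < x + h * (1 + h * (u - v) - x)) by (apply convex_pos; auto).
    pose proof (Hj _ _ Pa Pb) as J.
    replace ((x + h * (1 + h * (u + v) - x) + (x + h * (1 + h * (u - v) - x))) / 2)
      with x in J by (unfold x; field).
    set (A := m (x + h * (1 + h * (u + v) - x))) in *.
    set (B := m (x + h * (1 + h * (u - v) - x))) in *.
    assert (EU : E k <= m (1 + h * (u + v)) - m x).
    { rewrite Eq1. apply Rmult_le_reg_r with h; auto.
      unfold Rdiv. rewrite Rmult_assoc, Rinv_l by lra. lra. }
    assert (EL : - (m (1 + h * (u - v)) - m x) <= E k).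
    { rewrite Eq1. apply Rmult_le_reg_r with h; auto.
      unfold Rdiv. rewrite Rmult_assoc, Rinv_l by lra. lra. }
    unfold F. fold h. fold x.
    pose proof (Rabs_triang_inv (m (1 + h * (u + v)) - 1) (m x - 1)).
    pose proof (Rabs_triang_inv (m (1 + h * (u - v)) - 1) (m x - 1)).
    pose proof (Rle_abs (m (1 + h * (u + v)) - 1 - (m x - 1))).
    pose proof (Rle_abs (m (1 + h * (u - v)) - 1 - (m x - 1))).
    pose proof (Rle_abs (-(m (1 + h * (u + v)) - 1 - (m x - 1)))).
    pose proof (Rabs_pos (m (1 + h * (u + v)) - 1)).
    pose proof (Rabs_pos (m (1 + h * (u - v)) - 1)).
    pose proof (Rabs_pos (m x - 1)).
    pose proof (Rabs_triang (m (1 + h * (u + v)) - 1) (-(m x - 1))).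
    pose proof (Rabs_triang (m (1 + h * (u - v)) - 1) (-(m x - 1))).
    rewrite Rabs_Ropp in *.
    apply Rabs_le. split.
    - apply Rle_trans with (- (m (1 + h * (u - v)) - m x)); auto.
      assert (Rabs (m (1 + h * (u - v)) - 1 + - (m x - 1)) >= m (1 + h * (u - v)) - m x)
        by (pose proof (Rle_abs (m (1 + h * (u - v)) - 1 + - (m x - 1))); lra).
      lra.
    - apply Rle_trans with (m (1 + h * (u + v)) - m x); auto.
      assert (Rabs (m (1 + h * (u + v)) - 1 + - (m x - 1)) >= m (1 + h * (u + v)) - m x)
        by (pose proof (Rle_abs (m (1 + h * (u + v)) - 1 + - (m x - 1))); lra).
      lra. }
  assert (Hu : Un_cv (Sq m u) (D s + D t - 0)).
  { apply Un_cv_ext with (fun k => T k - E k).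
    { intro k. unfold E. ring. }
    apply CV_minus; auto. }
  rewrite Rminus_0_r in Hu. exact (UL_sequence _ _ _ (HD u) Hu).
Qed.

Lemma D_minor m : maps_Rpos_to_Rpos m -> multiplicative_pos m -> jensen_convex_pos m ->
  forall s l, Un_cv (Sq m s) l -> -1 < s -> l <= m (1 + s) - 1.
Proof.
  intros Hp Hm Hj s l Hcv Hs.
  assert (V : forall k, (k >= 0)%nat -> 0 < 1 + hh k * s).
  { intros k _. pose proof (hh_pos k). pose proof (hh_le1 k). nra. }
  apply cv_le with (Sq m s); auto. intro k.
  pose proof (Sq_dec_from m Hp Hm Hj s 0 V k). rewrite Nat.add_0_r in H.
  unfold Sq at 2 in H. rewrite hh_0 in H. rewrite Rmult_1_l, Rdiv_1_r in H. exact H.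
Qed.

Theorem theorem5 (m : R -> R) :
  maps_Rpos_to_Rpos m -> multiplicative_pos m ->
  (jensen_convex_pos m <->
   exists a : R -> R, additive a /\ forall t, 0 < t -> m t >= 1 + a (t - 1)).
Proof.
  intros Hp Hm. split.
  - intros Hj.
    pose proof (Sq_cv m Hp Hm Hj) as Hc.
    set (D := fun s => proj1_sig (constructive_indefinite_description _ (Hc s))).
    assert (HD : forall s, Un_cv (Sq m s) (D s))
      by (intro s; exact (proj2_sig (constructive_indefinite_description _ (Hc s)))).
    exists D. split.
    + apply (additive_D m Hp Hm Hj D HD).
    + intros t Ht. pose proof (D_minor m Hp Hm Hj (t - 1) (D (t - 1)) (HD _) ltac:(lra)).
      replace (1 + (t - 1)) with t in H by ring. lra.
  - intros [a [Ha Hge]] x y Hx Hy.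
    set (z := (x + y) / 2).
    assert (Hz : 0 < z) by (unfold z; lra).
    assert (E1 : m x = m z * m (x / z)).
    { rewrite <- Hm; auto. f_equal. field. lra. apply Rdiv_lt_0_compat; auto. }
    assert (E2 : m y = m z * m (y / z)).
    { rewrite <- Hm; auto. f_equal. field. lra. apply Rdiv_lt_0_compat; auto. }
    pose proof (Hge (x / z) ltac:(apply Rdiv_lt_0_compat; auto)) as G1.
    pose proof (Hge (y / z) ltac:(apply Rdiv_lt_0_compat; auto)) as G2.
    assert (A0 : a 0 = 0) by (pose proof (Ha 0 0) as H0; rewrite Rplus_0_r in H0; lra).
    assert (Sum : a (x / z - 1) + a (y / z - 1) = 0).
    { rewrite <- Ha. replace (x / z - 1 + (y / z - 1)) with 0; auto.
      unfold z. field. lra. }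
    pose proof (Hp z Hz). rewrite E1, E2. fold z. nra.
Qed.
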